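(* Let $K$ and $K'$ be two CMIs. Then $\mathrm{can}(\mathrm{pur}(K))=\mathrm{can}(\mathrm{pur}(K'))$ if and only if $K'$ is a sub-CMI of $K$ and $K$ is a sub-CMI of $K'$.
   Context: Setting: $X_1,\dots,X_n$ jointly distributed discrete random variables with $H(X_i)<\infty$; distribution unspecified. $X_\alpha=(X_i,i\in\alpha)$, $X_\emptyset$ constant. A CMI is $K=(C,\langle Q_1,\dots,Q_k\rangle)$, $k\ge0$, $C\subseteq\{1,\dots,n\}$, $\langle\cdot\rangle$ an unordered multiset of subsets; valid (for a given distribution) if $\sum_iH(X_{Q_i}|X_C)-H(X_{Q_1},\dots,X_{Q_k}|X_C)=0$. Empty members may be deleted; equality of CMIs means equal conditioning sets and equal multisets. Degenerate = valid for every distribution; all degenerate CMIs are identified and written $(\cdot,\langle\ \rangle)$. $\mathrm{pur}(K)=(C,\langle Q_i\setminus C:Q_i\setminus C\ne\emptyset\rangle)$. For pure $K$: $\mathbb I_K$ = indices lying in at least two members of the collection if $k\ge2$, else $\emptyset$; $P_1,\dots,P_t$ the nonempty sets among $Q_i\setminus\mathbb I_K$; $\mathrm{can}(K)=(\cdot,\langle\ \rangle)$ if $k\le1$, $(C,\langle\mathbb I_K,\mathbb I_K\rangle)$ if $k\ge2,\mathbb I_K\ne\emptyset,t\le1$, $(C,\langle P_1..P_t\rangle)$ if $k\ge2,\mathbb I_K=\emptyset$, $(C,\langle\mathbb I_K,\mathbb I_K,P_1..P_t\rangle)$ if $k\ge2,\mathbb I_K\ne\emptyset,t\ge2$. For general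 $K$, $\mathbb I_K$ is the repeated-index set of $\mathrm{pur}(K)$ and $\mathrm{can}(\mathrm{pur}(K))$ is written $(C,\langle\mathbb I_K,\mathbb I_K,P_i,1\le i\le t\rangle)$ (copies of $\mathbb I_K$ omitted if empty; degenerate $K$ has $\mathbb I_K=\emptyset$, $t\in\{0,1\}$). $P=\bigcup_iP_i$, $S=C\cup P$. $R_K^{K'}$: with $\mathrm{can}(\mathrm{pur}(K'))=(C',\langle\mathbb I_{K'},\mathbb I_{K'},P'_j,1\le j\le s\rangle)$, $D=\mathbb I_{K'}\setminus\mathbb I_K$ and $T_1,\dots,T_u$ the nonempty sets among $P'_j\setminus\mathbb I_K$: $R_K^{K'}=(\cdot,\langle\ \rangle)$ if $D=\emptyset,u\le1$; $(C'\setminus\mathbb I_K,\langle T_1..T_u\rangle)$ if $D=\emptyset,u\ge2$; $(C'\setminus\mathbb I_K,\langle D,D\rangle)$ if $D\ne\emptyset,u\le1$; $(C'\setminus\mathbb I_K,\langle D,D,T_1..T_u\rangle)$ if $D\ne\emptyset,u\ge2$. Sub-CMI: with $K''=R_K^{K'}$, $\mathrm{can}(\mathrm{pur}(K''))=(C'',\langle\mathbb I_{K''},\mathbb I_{K''},P''_j,1\le j\le r\rangle)$, $P''=\bigcup_jP''_j$, $K'$ is a sub-CMI of $K$ if: (i) $K'=(\cdot,\langle\ \rangle)$; or (ii) $\mathrm{can}(\mathrm{pur}(K''))=(\cdot,\langle\ \rangle)$ and $C\subseteq C'$; or (iii) $\mathrm{can}(\mathrm{pur}(K''))\ne(\cdot,\langle\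 \rangle)$, $\mathbb I_{K''}=\emptyset$, $P''\subseteq P$, $C\subseteq C''\subseteq S\setminus P''$, and whenever $m_1\in P''_{j_1}$, $m_2\in P''_{j_2}$ with $j_1\ne j_2$, then $m_1\in P_{i_1}$, $m_2\in P_{i_2}$ with $i_1\ne i_2$. *)

(* Defs.v *)
From mathcomp Require Import all_boot.
Set Implicit Arguments. Unset Strict Implicit. Unset Printing Implicit Defensive.

(* Indices {1,...,n} are represented by 'I_n.  A CMI K = (C, <Q_1,...,Q_k>)
   is a conditioning set together with a list of subsets, the list being
   read as a multiset (up to permutation). *)
Record cmi (n : nat) := CMI { cond : {set 'I_n}; memb : seq {set 'I_n} }.

Section CMI.
Variable n : nat.
Implicit Types K : cmi n.

Definition deg : cmi n := CMI set0 [::].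

Definition pur K : cmi n :=
  CMI (cond K) [seq Q :\: cond K | Q <- memb K & Q :\: cond K != set0].

(* degenerate (valid for every distribution): after purification at most
   one member remains *)
Definition degen K : bool := size (memb (pur K)) <= 1.

Definition cmi_eq K1 K2 : bool :=
  (degen K1 && degen K2) ||
  ((cond K1 == cond K2) &&
   perm_eq [seq Q <- memb K1 | Q != set0] [seq Q <- memb K2 | Q != set0]).

Definition Iset_pure K : {set 'I_n} :=
  if 2 <= size (memb K)
  then [set i | 2 <= count (fun Q : {set 'I_n} => i \in Q) (memb K)]
  else set0.

Definition Pseq_pure K : seq {set 'I_n} :=
  [seq Q :\: Iset_pure K | Q <- memb K & Q :\: Iset_pure K != set0].

(* can(K) for pure K *)
Definition can K : cmi n :=
  let I := Iset_pure K in let Ps := Pseq_pure K in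
  if size (memb K) <= 1 then deg
  else if I == set0 then CMI (cond K) Ps
  else if size Ps <= 1 then CMI (cond K) [:: I; I]
  else CMI (cond K) [:: I, I & Ps].

Definition IK K : {set 'I_n} := Iset_pure (pur K).
Definition PK K : seq {set 'I_n} := Pseq_pure (pur K).
Definition Punion K : {set 'I_n} := \bigcup_(Q <- PK K) Q.
Definition SK K : {set 'I_n} := cond K :|: Punion K.

Definition Rcmi K K' : cmi n :=
  let D := IK K' :\: IK K in
  let Ts := [seq P :\: IK K | P <- PK K' & P :\: IK K != set0] in
  let C0 := cond K' :\: IK K in
  if D == set0 then
    (if size Ts <= 1 then deg else CMI C0 Ts)
  else
    (if size Ts <= 1 then CMI C0 [:: D; D] else CMI C0 [:: D, D & Ts]).

Definition subCMI K' K : Prop :=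
  let K'' := Rcmi K K' in
  let P'' := PK K'' in
  degen K' \/
  (degen (can (pur K'')) /\ cond K \subset cond K') \/
  (~~ degen (can (pur K'')) /\ IK K'' = set0 /\
   Punion K'' \subset Punion K /\
   cond K \subset cond K'' /\ cond K'' \subset SK K :\: Punion K'' /\
   (forall (j1 j2 : nat) (m1 m2 : 'I_n),
      j1 < size P'' -> j2 < size P'' -> j1 != j2 ->
      m1 \in nth set0 P'' j1 -> m2 \in nth set0 P'' j2 ->
      exists i1 i2 : nat,
        [/\ i1 < size (PK K), i2 < size (PK K), i1 != i2,
            m1 \in nth set0 (PK K) i1 & m2 \in nth set0 (PK K) i2])).

End CMI.

(* Main.v *)
Require Import Defs.
From mathcomp Require Import all_boot.
Set Implicit Arguments. Unset Strict Implicit. Unset Printing Implicit Defensive.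

Section Aux.
Variable n : nat.
Implicit Types (K : cmi n) (M : seq {set 'I_n}) (C I : {set 'I_n}) (i : 'I_n).

Lemma djP (A B : {set 'I_n}) :
  reflect (forall x, x \in A -> x \in B -> False) [disjoint A & B].
Proof.
rewrite disjoint_subset; apply: (iffP subsetP) => H x xA.
  by move=> xB; have := H x xA; rewrite inE /= xB.
by rewrite inE; apply/negP; exact: H x xA.
Qed.

Definition dj (A B : {set 'I_n}) := [disjoint A & B].
Definition good C M := all (fun Q : {set 'I_n} => (Q != set0) && [disjoint Q & C]) M.

Lemma pur_good C M : good C M -> pur (CMI C M) = CMI C M.
Proof.
rewrite /pur /=; move=> H; f_equal.
elim: M H => //= Q M IH /andP[/andP[Q0 /setDidPl QC] HM].
by rewrite QC Q0 /= QC IH.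
Qed.

Lemma pur_memb K : good (cond K) (memb (pur K)).
Proof.
rewrite /pur /=; elim: (memb K) => //= Q M IH.
case: ifP => //= ->; rewrite IH andbT /=.
by apply/djP => x; rewrite inE => /andP[/negP].
Qed.

Lemma count_pw M i : pairwise dj M -> count (fun Q : {set 'I_n} => i \in Q) M <= 1.
Proof.
elim: M => // Q M IH; rewrite pairwise_cons /= => /andP[HA HP].
case: (boolP (i \in Q)) => Hi /=; last by rewrite add0n IH.
suff -> : count (fun Q0 : {set 'I_n} => i \in Q0) M = 0 by [].
apply/eqP; rewrite -leqn0 leqNgt -has_count; apply/hasP => -[Q' QM iQ'].
by move/allP: HA => /(_ Q' QM) /djP H; exact: H i Hi iQ'.
Qed.

Lemma Iset_count C M i : 2 <= count (fun Q : {set 'I_n} => i \in Q) M -> i \in Iset_pure (CMI C M).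
Proof.
rewrite /Iset_pure /=; case: ifP => Hs; first by rewrite inE.
move=> H; have := count_size (fun Q : {set 'I_n} => i \in Q) M.
by move: Hs H; case: (size M) => [|[|k]] //=; case: (count _ _) => [|[|]].
Qed.

Lemma Iset_mem C M i : i \in Iset_pure (CMI C M) -> 2 <= count (fun Q : {set 'I_n} => i \in Q) M.
Proof. by rewrite /Iset_pure /=; case: ifP => _; rewrite ?inE. Qed.

Lemma Iset_pw C M : pairwise dj M -> Iset_pure (CMI C M) = set0.
Proof.
move=> H; apply/setP => i; rewrite inE; apply/negP => /Iset_mem.
by have := count_pw i H; case: (count _ _) => [|[|]].
Qed.

Lemma Pseq_pw C M : good C M -> pairwise dj M -> Pseq_pure (CMI C M) = M.
Proof.
move=> G H; rewrite /Pseq_pure Iset_pw //=.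
elim: M G {H} => //= Q M IH /andP[/andP[Q0 _] G].
by rewrite setD0 Q0 /= setD0 IH.
Qed.

Lemma pairwise_PD I M : (forall i, 2 <= count (fun Q : {set 'I_n} => i \in Q) M -> i \in I) ->
  pairwise dj [seq Q :\: I | Q <- M & Q :\: I != set0].
Proof.
elim: M => //= Q M IH H.
have H' : forall i, 2 <= count (fun Q : {set 'I_n} => i \in Q) M -> i \in I.
  move=> i Hi; apply: H; apply: leq_trans Hi _; exact: leq_addl.
case: ifP => _; last exact: IH.
rewrite /= IH // andbT.
apply/allP => P /mapP [Q' /[!mem_filter] /andP[_ Q'M] ->].
apply/djP => i /[!inE] /andP[iI iQ] /andP[_ iQ'].
move/negP: iI; apply; apply: H; rewrite iQ add1n ltnS -has_count.
by apply/hasP; exists Q'.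
Qed.

Lemma good_PD C I M : good C M -> good C [seq Q :\: I | Q <- M & Q :\: I != set0].
Proof.
elim: M => //= Q M IH /andP[/andP[_ QC] G].
case: ifP => /= H; rewrite ?IH // H /= andbT.
apply: disjointWl QC; exact: subsetDl.
Qed.

Lemma IK_mem K i : i \in IK K -> exists2 Q, Q \in memb (pur K) & i \in Q.
Proof.
rewrite /IK => /Iset_mem H; have : has (fun Q : {set 'I_n} => i \in Q) (memb (pur K)).
  by rewrite has_count; apply: leq_trans H.
by move/hasP.
Qed.

Lemma IK_disj K : [disjoint IK K & cond K].
Proof.
apply/djP => i /IK_mem [Q QM iQ].
have /allP /(_ Q QM) /andP[_ /djP] := pur_memb K.
by apply.
Qed.

Lemma PK_good K : good (cond K) (PK K).
Proof. exact/good_PD/pur_memb. Qed.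

Lemma PK_pw K : pairwise dj (PK K).
Proof.
apply: pairwise_PD => i; case: (pur K) => C M /= H.
by apply: Iset_count.
Qed.

Lemma PK_disjI K : all (fun P : {set 'I_n} => [disjoint P & IK K]) (PK K).
Proof.
rewrite /PK /Pseq_pure -/(IK K); elim: (memb (pur K)) => //= Q M IH.
case: ifP => //= _; rewrite IH andbT.
by apply/djP => x; rewrite inE => /andP[/negP].
Qed.

Lemma good_uniq C M : good C M -> pairwise dj M -> uniq M.
Proof.
elim: M => // Q M IH /andP[/andP[Q0 _] G]; rewrite pairwise_cons /= => /andP[A P].
rewrite IH // andbT; apply/negP => QM.
move/allP: A => /(_ Q QM); rewrite /dj -setI_eq0 setIid.
by rewrite (negbTE Q0).
Qed.

Lemma IK_degen K : degen K -> IK K = set0.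
Proof. by rewrite /degen /IK /Iset_pure ltnNge => ->. Qed.

Lemma PK_I0 K : IK K = set0 -> PK K = memb (pur K).
Proof.
rewrite /PK /Pseq_pure -/(IK K) => ->.
have := pur_memb K; elim: (memb (pur K)) => //= Q M IH /andP[/andP[Q0 _] G].
by rewrite setD0 Q0 /= setD0 IH.
Qed.

Lemma size_PK K : size (PK K) <= size (memb (pur K)).
Proof. by rewrite /PK /Pseq_pure size_map size_filter count_size. Qed.

Definition canm K := if IK K == set0 then PK K
  else IK K :: IK K :: (if size (PK K) <= 1 then [::] else PK K).

Lemma can_shape K : ~~ degen K -> can (pur K) = CMI (cond K) (canm K).
Proof.
rewrite /degen /can /canm /IK /PK => /negbTE ->.
by case: ifP => _ //; case: ifP.
Qed.

Lemma can_deg K : degen K -> can (pur K) = deg n.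
Proof. by rewrite /degen /can => ->. Qed.

Lemma canm_good K : ~~ degen K -> good (cond K) (canm K).
Proof.
move=> _; rewrite /canm; case: ifP => I0; first exact: PK_good.
have HI : (IK K != set0) && [disjoint IK K & cond K] by rewrite I0 IK_disj.
rewrite /=; apply/and3P; split => //; case: ifP => // _; apply: PK_good.
Qed.

Lemma canm_size K : ~~ degen K -> 1 < size (canm K).
Proof.
rewrite /canm; case: ifP => // /eqP I0; rewrite PK_I0 //.
by rewrite /degen ltnNge.
Qed.

Lemma degen_can K : degen (can (pur K)) = degen K.
Proof.
case: (boolP (degen K)) => D; first by rewrite can_deg.
rewrite can_shape // {1}/degen pur_good ?canm_good //= leqNgt.
by rewrite canm_size.
Qed.


Lemma filt_good I s : good I s -> [seq P :\: I | P <- s & P :\: I != set0] = s.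
Proof.
elim: s => //= Q M IH /andP[/andP[Q0 /setDidPl QC] HM].
by rewrite QC Q0 /= QC IH.
Qed.

Lemma PK_goodI K : good (IK K) (PK K).
Proof.
have := PK_good K; have := PK_disjI K; elim: (PK K) => //= P s IH.
by case/andP=> D1 D2 /andP[/andP[-> _] G]; rewrite D1 IH.
Qed.

Lemma IK_count K i : 2 <= count (fun Q : {set 'I_n} => i \in Q) (memb (pur K)) -> i \in IK K.
Proof. by rewrite /IK; case: (pur K) => C M; apply: Iset_count. Qed.

Lemma R_DD C (D : {set 'I_n}) (X : seq {set 'I_n}) : D != set0 -> [disjoint D & C] ->
  ~~ degen (CMI C (D :: D :: X)) /\ IK (CMI C (D :: D :: X)) != set0.
Proof.
move=> D0 DC.
have E : memb (pur (CMI C (D :: D :: X))) =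
   D :: D :: [seq Q :\: C | Q <- X & Q :\: C != set0].
  by rewrite /pur /= (setDidPl DC) D0 /= (setDidPl DC).
split; first by rewrite /degen E.
case/set0Pn: D0 => i iD; apply/set0Pn; exists i; apply: IK_count.
by rewrite E /= iD.
Qed.

Lemma Rcmi_D K K' : IK K' :\: IK K != set0 ->
  ~~ degen (Rcmi K K') /\ IK (Rcmi K K') != set0.
Proof.
move=> D0.
have DC : [disjoint IK K' :\: IK K & cond K' :\: IK K].
  apply/djP => x /[!inE] /andP[_ xI] /andP[_ xC].
  by move/djP: (IK_disj K') => /(_ x xI); apply.
rewrite /Rcmi (negbTE D0); case: ifP => _; exact: R_DD.
Qed.

Lemma in_bigcupP (s : seq {set 'I_n}) x :
  reflect (exists2 Q, Q \in s & x \in Q) (x \in \bigcup_(Q <- s) Q).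
Proof.
elim: s => [|Q s IH]; first by rewrite big_nil inE; constructor => -[].
rewrite big_cons in_setU; apply: (iffP orP).
  case=> [xQ|/IH [Q' Q's xQ']]; first by exists Q; rewrite ?inE ?eqxx.
  by exists Q'; rewrite // inE Q's orbT.
move=> [Q' /[!inE] /orP[/eqP <-|Q's] xQ']; first by left.
by right; apply/IH; exists Q'.
Qed.

Definition sep (A B : seq {set 'I_n}) := forall (j1 j2 : nat) (m1 m2 : 'I_n),
      j1 < size A -> j2 < size A -> j1 != j2 ->
      m1 \in nth set0 A j1 -> m2 \in nth set0 A j2 ->
      exists i1 i2 : nat,
        [/\ i1 < size B, i2 < size B, i1 != i2,
            m1 \in nth set0 B i1 & m2 \in nth set0 B i2].

Lemma sep_size C A B : sep A B -> good C A -> 1 < size A -> 1 < size B.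
Proof.
move=> S G sA.
have nz : forall j, j < size A -> exists m, m \in nth set0 A j.
  move=> j jA; apply/set0Pn.
  by move/allP: G => /(_ _ (mem_nth set0 jA)) /andP[].
have [m1 H1] := nz 0 (ltnW sA); have [m2 H2] := nz 1 sA.
have [i1 [i2 [b1 b2 d _ _]]] := S 0 1 m1 m2 (ltnW sA) sA isT H1 H2.
move: b1 b2 d; case: (size B) => [|[|k]] //.
by case: i1 => // ; case: i2.
Qed.

Lemma pw_nth B (i j : nat) x : pairwise dj B -> i < size B -> j < size B ->
  x \in nth set0 B i -> x \in nth set0 B j -> i = j.
Proof.
move=> /(pairwiseP set0) P iB jB xi xj.
case: (ltngtP i j) => // h.
  by have /djP := P i j iB jB h; move=> /(_ x xi xj).
by have /djP := P j i jB iB h; move=> /(_ x xj xi).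
Qed.

Lemma sep_sub CA CB A B P P' m x : good CA A -> pairwise dj A -> good CB B -> pairwise dj B ->
  sep A B -> P \in B -> P' \in A -> m \in P -> m \in P' -> x \in P ->
  x \in \bigcup_(Q <- A) Q -> x \in P'.
Proof.
move=> GA PA GB PB S PB' PA' mP mP' xP /in_bigcupP [P'' P''A xP''].
case: (P'' =P P') => [<- //|ne].
have j1s : index P' A < size A by rewrite index_mem.
have j2s : index P'' A < size A by rewrite index_mem.
have d : index P' A != index P'' A.
  apply/eqP => e; apply: ne.
  by rewrite -(nth_index set0 P''A) -e nth_index.
have g1 : m \in nth set0 A (index P' A) by rewrite nth_index.
have g2 : x \in nth set0 A (index P'' A) by rewrite nth_index.
have [i1 [i2 [b1 b2 d' h1 h2]]] := S _ _ m x j1s j2s d g1 g2.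
have ks : index P B < size B by rewrite index_mem.
have g3 : m \in nth set0 B (index P B) by rewrite nth_index.
have g4 : x \in nth set0 B (index P B) by rewrite nth_index.
have e1 := pw_nth PB b1 ks h1 g3.
have e2 := pw_nth PB b2 ks h2 g4.
by move: d'; rewrite e1 e2 eqxx.
Qed.

Lemma partition_perm CA CB A B : good CA A -> pairwise dj A -> good CB B -> pairwise dj B ->
  \bigcup_(Q <- A) Q \subset \bigcup_(Q <- B) Q ->
  \bigcup_(Q <- B) Q \subset \bigcup_(Q <- A) Q ->
  sep A B -> sep B A -> perm_eq A B.
Proof.
move=> GA PA GB PB sAB sBA SAB SBA.
have key : forall CA CB A B, good CA A -> pairwise dj A -> good CB B -> pairwise dj B ->
  \bigcup_(Q <- A) Q \subset \bigcup_(Q <- B) Q ->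
  \bigcup_(Q <- B) Q \subset \bigcup_(Q <- A) Q ->
  sep A B -> sep B A -> forall P, P \in A -> P \in B.
  move=> CA' CB' A' B' GA' PA' GB' PB' s1 s2 S1 S2 P PA''.
  have : P != set0 by move/allP: GA' => /(_ P PA'') /andP[].
  case/set0Pn => m mP.
  have : m \in \bigcup_(Q <- B') Q.
    by apply: (subsetP s1); apply/in_bigcupP; exists P.
  case/in_bigcupP => P' P'B mP'.
  suff -> : P = P' by [].
  apply/eqP; rewrite eqEsubset; apply/andP; split; apply/subsetP => x xX.
    apply: (sep_sub GB' PB' GA' PA' S2 PA'' P'B mP mP' xX).
    by apply: (subsetP s1); apply/in_bigcupP; exists P.
  apply: (sep_sub GA' PA' GB' PB' S1 P'B PA'' mP' mP xX).
  by apply: (subsetP s2); apply/in_bigcupP; exists P'.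
apply: uniq_perm; [exact: good_uniq GA PA|exact: good_uniq GB PB|].
move=> P; apply/idP/idP.
  exact: (key _ _ _ _ GA PA GB PB sAB sBA SAB SBA).
exact: (key _ _ _ _ GB PB GA PA sBA sAB SBA SAB).
Qed.

Lemma R_same K K' : IK K = IK K' ->
  Rcmi K K' = if size (PK K') <= 1 then deg n else CMI (cond K') (PK K').
Proof.
move=> E; rewrite /Rcmi /= E setDv eqxx filt_good ?PK_goodI //.
have -> : cond K' :\: IK K' = cond K'.
  by apply/setDidPl; rewrite disjoint_sym IK_disj.
by [].
Qed.

Lemma degen_deg : degen (can (pur (deg n))).
Proof. by rewrite degen_can. Qed.

Lemma R_good_props K' : 1 < size (PK K') ->
  let R := CMI (cond K') (PK K') in
  [/\ ~~ degen (can (pur R)), IK R = set0, PK R = PK K', cond R = cond K' &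
      Punion R = \bigcup_(Q <- PK K') Q].
Proof.
move=> s R.
have G := PK_good K'; have P := PK_pw K'.
have pR : pur R = R by rewrite /R pur_good.
have IR : IK R = set0 by rewrite /IK pR Iset_pw.
have PR : PK R = PK K' by rewrite /PK pR Pseq_pw.
split => //; last by rewrite /Punion PR.
by rewrite degen_can /degen pR /= -ltnNge.
Qed.

Lemma sub_sameI K K' : IK K = IK K' -> subCMI K' K ->
  degen K' \/ (cond K \subset cond K' /\ (1 < size (PK K') ->
     \bigcup_(Q <- PK K') Q \subset Punion K /\ sep (PK K') (PK K))).
Proof.
move=> E; rewrite /subCMI R_same //.
case: ifP => s.
  case=> [D|[[_ H]|[H _]]]; [by left|right|by rewrite degen_deg in H].
  by split => // s'; rewrite ltnNge s in s'.
have s' : 1 < size (PK K') by rewrite ltnNge s.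
have [nd IR PR CR UR] := R_good_props s'.
case=> [D|[[H _]|[_ [_ [H1 [H2 [_ H3]]]]]]]; [by left| by rewrite (negbTE nd) in H|].
right; rewrite -CR; split => // _; rewrite -UR; split => //.
by rewrite -PR.
Qed.

Lemma sub_I K K' : subCMI K' K -> degen K' \/ IK K' \subset IK K.
Proof.
case: (boolP (IK K' \subset IK K)) => [h|ns]; first by move=> _; right.
have D0 : IK K' :\: IK K != set0 by rewrite setD_eq0.
have [nd nI] := Rcmi_D D0.
case=> [D|[[H _]|[_ [H _]]]]; [by left|by rewrite degen_can (negbTE nd) in H|].
by rewrite H eqxx in nI.
Qed.

Lemma degen_not_sub K K' : degen K' -> ~~ degen K -> ~ subCMI K K'.
Proof.
move=> dK' ndK S.
have I0' := IK_degen dK'.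
have I0 : IK K = set0.
  case: (sub_I S) => [D|]; first by rewrite D in ndK.
  by rewrite I0' subset0 => /eqP.
have sK : 1 < size (PK K) by rewrite PK_I0 // ltnNge.
case: (sub_sameI (etrans I0' (esym I0)) S) => [D|[_ /(_ sK) [_ Sp]]].
  by rewrite D in ndK.
have := sep_size Sp (PK_good K) sK.
have := size_PK K'; move: dK'; rewrite /degen.
by case: (size (memb (pur K'))) => [|[|]] //; case: (size (PK K')) => [|[|]].
Qed.

Lemma cmi_eq_sym (A B : cmi n) : cmi_eq A B = cmi_eq B A.
Proof. by rewrite /cmi_eq andbC eq_sym perm_sym. Qed.

Lemma filter_nz C M : good C M -> [seq Q <- M | Q != set0] = M.
Proof.
move=> G; apply/all_filterP; apply/allP => Q QM.
by move/allP: G => /(_ Q QM) /andP[].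
Qed.

Lemma not_eq_deg K K' : degen K -> ~~ degen K' -> ~~ cmi_eq (can (pur K)) (can (pur K')).
Proof.
move=> d nd; rewrite /cmi_eq !degen_can (negbTE nd) andbF /=.
rewrite can_deg // can_shape //= (filter_nz (canm_good nd)) //.
apply/negP => /andP[_ /perm_size] /= h.
by have := canm_size nd; rewrite -h.
Qed.

Lemma canm_uniq K : ~~ degen K -> uniq (canm K) = (IK K == set0).
Proof.
move=> nd; rewrite /canm; case: ifP => _.
  exact: good_uniq (PK_good K) (PK_pw K).
by rewrite /= inE eqxx.
Qed.

Lemma canm_perm K K' : ~~ degen K -> ~~ degen K' -> perm_eq (canm K) (canm K') ->
  IK K = IK K' /\ (perm_eq (PK K) (PK K') \/ (size (PK K) <= 1 /\ size (PK K') <= 1)).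
Proof.
move=> nd nd' pe.
have eu : (IK K == set0) = (IK K' == set0) by rewrite -!canm_uniq //; exact: perm_uniq pe.
move: pe; rewrite /canm -eu; case: ifP => I0.
  have I0' : IK K' == set0 by rewrite -eu.
  by move/eqP: I0 => ->; move/eqP: I0' => -> pe; split => //; left.
move=> pe; have eI : IK K = IK K'.
  move/permP: (pe) => /(_ (pred1 (IK K))) /=; rewrite eqxx.
  case: (IK K' =P IK K) => // ne.
  set X := (if size (PK K') <= 1 then _ else _).
  have uX : uniq X by rewrite /X; case: ifP => // _; exact: good_uniq (PK_good K') (PK_pw K').
  move: (count_uniq_mem (IK K) uX) => /= ->.
  by case: (_ \in _) => //; case: (count _ _).
rewrite eI in pe *; rewrite !perm_cons in pe; split => //.
move: pe; case: ifP => s1; case: ifP => s2; try by right.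
  by move/perm_size => /= h; move: s2; rewrite -h.
  by move/perm_size => /= h; move: s1; rewrite h.
by left.
Qed.

Lemma sub_eq K K' : ~~ degen K -> ~~ degen K' -> cond K = cond K' -> IK K = IK K' ->
  (perm_eq (PK K) (PK K') \/ (size (PK K) <= 1 /\ size (PK K') <= 1)) -> subCMI K' K.
Proof.
move=> nd nd' EC EI H; rewrite /subCMI R_same //.
case: ifP => s.
  by right; left; split; [exact: degen_deg|rewrite EC].
have s' : 1 < size (PK K') by rewrite ltnNge s.
have pe : perm_eq (PK K) (PK K') by case: H => // -[_]; rewrite s.
have [ndR IR PR CR UR] := R_good_props s'.
right; right; split => //; split => //.
rewrite PR CR UR.
have UE : \bigcup_(Q <- PK K') Q = Punion K by rewrite /Punion (perm_big _ pe).
split; first by rewrite UE.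
split; first by rewrite EC.
split.
  rewrite subsetD; apply/andP; split; first by rewrite /SK EC subsetUl.
  apply/djP => x xC /in_bigcupP [Q QP xQ].
  move/allP: (PK_good K') => /(_ Q QP) /andP[_ /djP] /(_ x xQ); apply.
  by [].
move=> j1 j2 m1 m2 b1 b2 d h1 h2.
have u' := good_uniq (PK_good K') (PK_pw K').
have M1 : nth set0 (PK K') j1 \in PK K by rewrite (perm_mem pe) mem_nth.
have M2 : nth set0 (PK K') j2 \in PK K by rewrite (perm_mem pe) mem_nth.
exists (index (nth set0 (PK K') j1) (PK K)), (index (nth set0 (PK K') j2) (PK K)).
split; rewrite ?index_mem ?nth_index //.
apply/eqP => e.
have : nth set0 (PK K') j1 == nth set0 (PK K') j2.
  by rewrite -(nth_index set0 M1) e nth_index.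
by rewrite nth_uniq // (negbTE d).
Qed.

End Aux.

Theorem mainTheorem14 (n : nat) (K K' : cmi n) :
  cmi_eq (can (pur K)) (can (pur K')) <-> (subCMI K' K /\ subCMI K K').
Proof.
split.
- move=> H.
  case: (boolP (degen K)) => dK; case: (boolP (degen K')) => dK'.
  + by split; left.
  + by move: (not_eq_deg dK dK'); rewrite H.
  + by move: (not_eq_deg dK' dK); rewrite cmi_eq_sym H.
  + move: H; rewrite /cmi_eq !degen_can (negbTE dK) /=.
    rewrite !can_shape //= (filter_nz (canm_good dK)) (filter_nz (canm_good dK')).
    case/andP => /eqP EC pe.
    have [EI H] := canm_perm dK dK' pe.
    split; first exact: sub_eq.
    apply: sub_eq => //; case: H => [p|[a b]]; [left; rewrite perm_sym|right].
    by [].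
    by [].
- case=> S1 S2.
  case: (boolP (degen K)) => dK; case: (boolP (degen K')) => dK'.
  + by rewrite /cmi_eq !degen_can dK dK'.
  + by case: (degen_not_sub dK dK' S1).
  + by case: (degen_not_sub dK' dK S2).
  + have EI : IK K = IK K'.
      case: (sub_I S1) => [D|h1]; first by rewrite D in dK'.
      case: (sub_I S2) => [D|h2]; first by rewrite D in dK.
      by apply/eqP; rewrite eqEsubset h1 h2.
    case: (sub_sameI EI S1) => [D|[c1 H1]]; first by rewrite D in dK'.
    case: (sub_sameI (esym EI) S2) => [D|[c2 H2]]; first by rewrite D in dK.
    have EC : cond K = cond K' by apply/eqP; rewrite eqEsubset c1 c2.
    rewrite /cmi_eq !degen_can (negbTE dK) /=.
    rewrite !can_shape //= (filter_nz (canm_good dK)) (filter_nz (canm_good dK')).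
    rewrite EC eqxx /= /canm EI.
    case: (leqP (size (PK K)) 1) => s; case: (leqP (size (PK K')) 1) => s'.
    * case: ifP => // /eqP I0.
      by move: dK; rewrite /degen -PK_I0 ?EI // s.
    * have [_ Sp] := H1 s'.
      by have := sep_size Sp (PK_good K') s'; rewrite ltnNge s.
    * have [_ Sp] := H2 s.
      by have := sep_size Sp (PK_good K) s; rewrite ltnNge s'.
    * have [U1 Sp1] := H1 s'; have [U2 Sp2] := H2 s.
      have pe : perm_eq (PK K) (PK K').
        apply: (partition_perm (PK_good K) (PK_pw K) (PK_good K') (PK_pw K')) => //.
      by case: ifP => _; rewrite ?perm_cons.
Qed.
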